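(* Let $r\ge2$, $k\ge 3$, and let $\widehat{F}_k$ be any $r$-coloring of $K_k$. Let $G$ be a graph on $n$ vertices, $S\subseteq V(G)$ an independent set with $s=|S|$, $H=G-S$ and $A=V(G)\setminus S$. Then there exists a vertex $v\in S$ with the following property: if $\widetilde{G}$ is the graph with vertex set $V(H)\cup\widetilde{S}$, where $\widetilde{S}$ is an independent set of $s$ new vertices each having neighborhood exactly $N_G(v)$ (so each is a twin of $v$), and $\widetilde{G}[A]=G[A]$, then $c_{r,\widehat{F}_k}(\widetilde{G})\ge c_{r,\widehat{F}_k}(G)$.
   Context: An $r$-coloring of a graph assigns colors from $\{1,\dots,r\}$ to edges (not necessarily properly). A copy of $\widehat{F}_k$ in a colored graph is a set of $k$ pairwise adjacent vertices admitting a bijection to $V(K_k)$ under which two edges have equal colors iff their images have equal colors in $\widehat{F}_k$; a coloring is $\widehat{F}_k$-free if it has no copy. $c_{r,\widehat{F}_k}(G)$ is the number of $\widehat{F}_k$-free $r$-colorings of $E(G)$. Two vertices are twins if they are non-adjacent and have the same neighborhood. *)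

(* Defs.v *)
From mathcomp Require Import all_boot.
Set Implicit Arguments. Unset Strict Implicit. Unset Printing Implicit Defensive.

(* A (simple) graph on a finite vertex type T is a boolean relation g,
   assumed symmetric and irreflexive where needed. *)

Definition edgeset (T : finType) (g : rel T) : {set {set T}} :=
  [set e : {set T} | [exists x, exists y, g x y && (e == [set x; y])]].

Definition edge_type (T : finType) (g : rel T) : finType :=
  {e : {set T} | e \in edgeset g}.

Definition coloring (T : finType) (g : rel T) (r : nat) : finType :=
  {ffun edge_type g -> 'I_r}.

Definition col (T : finType) (g : rel T) (r : nat) (c : coloring g r) (x y : T)
  : option 'I_r :=
  omap c (insub [set x; y] : option (edge_type g)).

Definition Kk (k : nat) : rel 'I_k := fun i j => i != j.

Definition has_copy (T : finType) (g : rel T) (r k : nat)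
  (F : coloring (@Kk k) r) (c : coloring g r) : bool :=
  [exists f : {ffun 'I_k -> T},
    [&& injectiveb f,
        [forall i, forall j, (i != j) ==> g (f i) (f j)] &
        [forall i, forall j, forall i', forall j',
           ((i != j) && (i' != j')) ==>
           ((col c (f i) (f j) == col c (f i') (f j'))
              == (col F i j == col F i' j'))]]].

Definition count_free (T : finType) (g : rel T) (r k : nat)
  (F : coloring (@Kk k) r) : nat :=
  #|[set c : coloring g r | ~~ has_copy F c]|.

(* The graph obtained from g by replacing the independent set S by |S|
   independent twins of v: vertices of S are reused as labels of the new
   twins; edges inside A = V \ S are unchanged; S stays independent; each
   vertex of S has neighborhood exactly N_g(v). *)
Definition twin_graph (T : finType) (g : rel T) (S : {set T}) (v : T) : rel T :=
  fun x y =>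
    if x \in S then (y \notin S) && g v y
    else if y \in S then g v x
    else g x y.

(* Main.v *)
Require Import Defs.
From mathcomp Require Import all_boot ssralg ssrnum ssrint.
From mathcomp Require Import perm.
Import GRing.Theory Num.Theory.

Lemma amgm (I : finType) (A : {set I}) (x : I -> nat) :
  #|A| * \prod_(i in A) x i <= \sum_(i in A) x i ^ #|A|.
Proof.
case: (posnP #|A|) => [->|n0]; first by rewrite mul0n.
rewrite -(leq_exp2r _ _ n0).
have H := @leif_AGM_scaled int I (mem A) (fun i => ((x i ^ #|A|)%N%:R)%R).
have {}H := fun h => preorder.Order.le_of_leif (H h).
rewrite -natr_sum -natrX in H.
rewrite (eq_bigr (fun i => (#|A| * x i ^ #|A|)%N%:R%R)) in H; last first.
  by move=> i _; rewrite natrM mulrC mulr_natr.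
rewrite -natr_prod ler_nat in H.
apply: leq_trans (H _); last by move=> i _; rewrite mulrn_wge0.
rewrite big_split /= prod_nat_const expnMn.
by rewrite -(big_morph _ (fun a b => expnMn a b _) (exp1n _)).
Qed.


Section Lab.
Variables (r k : nat) (T : finType) (F : coloring (@Kk k) r).

Local Notation Lab := {ffun T -> {ffun T -> option 'I_r}}.

Definition copy_at (h : Lab) (f : {ffun 'I_k -> T}) : bool :=
  [&& injectiveb f,
      [forall i, forall j, (i != j) ==> (h (f i) (f j) != None)] &
      [forall i, forall j, forall i', forall j',
         ((i != j) && (i' != j')) ==>
         ((h (f i) (f j) == h (f i') (f j'))
            == (col F i j == col F i' j'))]].

Definition copyL (h : Lab) : bool := [exists f, copy_at h f].

Lemma copy_at_eq (h1 h2 : Lab) (f1 f2 : {ffun 'I_k -> T}) :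
  injectiveb f1 = injectiveb f2 ->
  (forall i j, i != j -> h1 (f1 i) (f1 j) = h2 (f2 i) (f2 j)) ->
  copy_at h1 f1 = copy_at h2 f2.
Proof.
move=> Hi Hh; rewrite /copy_at Hi; congr (_ && (_ && _)).
  apply: eq_forallb => i; apply: eq_forallb => j.
  by case: (boolP (i != j)) => //= ij; rewrite Hh.
apply: eq_forallb => i; apply: eq_forallb => j.
apply: eq_forallb => i'; apply: eq_forallb => j'.
case: (boolP (i != j)) => //= ij; case: (boolP (i' != j')) => //= ij'.
by rewrite !Hh.
Qed.

Lemma copy_at_ext (h1 h2 : Lab) (f : {ffun 'I_k -> T}) :
  copy_at h1 f -> (forall x y, h1 x y != None -> h2 x y = h1 x y) ->
  copy_at h2 f.
Proof.
move=> C E; have := C; case/and3P: C => _ /forallP N _.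
rewrite (@copy_at_eq h1 h2 f f) // => i j ij.
have /forallP/(_ j) := N i; rewrite ij /= => Nij.
by rewrite E.
Qed.

Section Graph.
Variable g : rel T.
Hypothesis gsym : forall x y, g x y = g y x.
Hypothesis girr : forall x, ~~ g x x.

Lemma edgesetE x y : ([set x; y] \in edgeset g) = g x y.
Proof.
apply/idP/idP => [|gxy]; last by rewrite inE; apply/existsP; exists x; apply/existsP; exists y; rewrite gxy eqxx.
rewrite inE => /existsP [x' /existsP [y' /andP [G /eqP E]]].
have hx : x \in [set x'; y'] by rewrite -E !inE eqxx.
have hy : y \in [set x'; y'] by rewrite -E !inE eqxx orbT.
have hx' : x' \in [set x; y] by rewrite E !inE eqxx.
have hy' : y' \in [set x; y] by rewrite E !inE eqxx orbT.
move: hx hy hx' hy'; rewrite !inE.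
case/orP => /eqP ->; case/orP => /eqP ->; rewrite ?eqxx ?orbT //= ?G ?(gsym y') //.
- by move=> _; rewrite orbb => /eqP e; rewrite e (negbTE (girr _)) in G.
- by rewrite orbb => /eqP e; rewrite e (negbTE (girr _)) in G.
Qed.


Lemma colNone (c : coloring g r) x y : (col c x y != None) = g x y.
Proof.
rewrite /col -edgesetE; case: insubP => [e He _|He] /=; first by rewrite He.
by rewrite (negbTE He).
Qed.

Lemma col_sym (c : coloring g r) x y : col c x y = col c y x.
Proof. by rewrite /col setUC. Qed.

Definition labc (c : coloring g r) : Lab := [ffun x => [ffun y => col c x y]].

Definition validL (h : Lab) : bool :=
  [forall x, forall y, (h x y == h y x) && ((h x y != None) == g x y)].

Lemma has_copyE c : has_copy F c = copyL (labc c).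
Proof.
rewrite /has_copy /copyL; apply: eq_existsb => f; rewrite /copy_at.
congr (_ && (_ && _)).
  apply: eq_forallb => i; apply: eq_forallb => j.
  by rewrite !ffunE colNone.
by apply: eq_forallb => i; apply: eq_forallb => j;
   apply: eq_forallb => i'; apply: eq_forallb => j'; rewrite !ffunE.
Qed.

Lemma labc_valid c : validL (labc c).
Proof.
by apply/forallP => x; apply/forallP => y; rewrite !ffunE colNone [col c x y]col_sym !eqxx.
Qed.

Lemma col_edge (c : coloring g r) (e : edge_type g) x y :
  val e = [set x; y] -> col c x y = Some (c e).
Proof.
move=> E; rewrite /col; case: insubP => [e' He' E'|He] /=.
  by congr (Some (c _)); apply: val_inj; rewrite E'.
by rewrite -E (valP e) in He.
Qed.

Lemma labc_inj : injective labc.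
Proof.
move=> c1 c2 E; apply/ffunP => e.
have := valP e; rewrite inE => /existsP [x /existsP [y /andP [_ /eqP Ee]]].
have := congr1 (fun h : Lab => h x y) E; rewrite !ffunE.
by rewrite (col_edge c1 e x y Ee) (col_edge c2 e x y Ee) => -[].
Qed.

Lemma labc_surj (i0 : 'I_r) h : validL h -> exists c, labc c = h.
Proof.
move=> V.
have Vs x y : h x y = h y x by have /forallP/(_ y)/andP[/eqP] := forallP V x.
have Vn x y : (h x y != None) = g x y by have /forallP/(_ y)/andP[_ /eqP] := forallP V x.
pose c : coloring g r := [ffun e : edge_type g =>
   odflt i0 (obind (fun x => obind (fun y => h x y) [pick y in val e | y != x])
      [pick x in val e])].
exists c; apply/ffunP => x; apply/ffunP => y; rewrite !ffunE.
case: (boolP (g x y)) => gxy; last first.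
  by move: (colNone c x y) (Vn x y); rewrite (negbTE gxy); do 2 move/negbFE/eqP ->.
have eE : [set x; y] \in edgeset g by rewrite edgesetE.
rewrite (col_edge c (Sub [set x; y] eE) x y) //.
have xy : x != y by apply: contraTneq gxy => ->; rewrite girr.
rewrite ffunE /=.
case: (pickP (fun x0 => x0 \in [set x; y])) => [x' Hx' |]; last by move/(_ x); rewrite !inE eqxx.
rewrite /=.
case: (pickP (fun y0 => (y0 \in [set x; y]) && (y0 != x'))) => [y' /andP [Hy' yx'] |]; last first.
  move: Hx'; rewrite !inE => /orP [] /eqP ->.
    by move/(_ y); rewrite !inE eqxx orbT eq_sym xy.
  by move/(_ x); rewrite !inE eqxx xy.
have : h x' y' = h x y.
  move: Hx' Hy' yx'; rewrite !inE.
  by case/orP => /eqP ->; case/orP => /eqP ->; rewrite ?eqxx //= => _; rewrite Vs.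
rewrite /= => ->; move: (Vn x y); rewrite gxy; by case: (h x y).
Qed.

Definition freeL := [set h : Lab | validL h && ~~ copyL h].

Lemma count_freeE (i0 : 'I_r) : count_free g F = #|freeL|.
Proof.
rewrite /count_free -(card_in_imset (f := labc)); last by move=> ? ? _ _; apply: labc_inj.
apply: eq_card => h; rewrite inE; apply/imsetP/andP.
  by case=> c; rewrite inE has_copyE => H ->; rewrite labc_valid.
case=> V N; have [c Ec] := labc_surj i0 _ V.
by exists c; rewrite // inE has_copyE Ec.
Qed.

End Graph.

Lemma validP g h : validL g h ->
  (forall x y, h x y = h y x) /\ (forall x y, (h x y != None) = g x y).
Proof.
move=> V; split=> x y.
  by have /forallP/(_ y)/andP[/eqP] := forallP V x.
by have /forallP/(_ y)/andP[_ /eqP] := forallP V x.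
Qed.

Lemma copy_at_None h f a b : copy_at h f -> a != b -> h (f a) (f b) != None.
Proof.
by case/and3P => _ /forallP N _ ab; have /forallP/(_ b) := N a; rewrite ab.
Qed.

Section SS.
Variable S : {set T}.

Definition restrictA (h : Lab) : Lab :=
  [ffun x => [ffun y => if (x \in S) || (y \in S) then None else h x y]].

Definition combine (hA : Lab) (w : T) (s : {ffun T -> option 'I_r}) : Lab :=
  [ffun x => [ffun y => if x == w then s y else if y == w then s x else hA x y]].

Definition validA (g : rel T) (hA : Lab) : bool :=
  [forall x, forall y, (hA x y == hA y x) &&
     ((hA x y != None) == [&& x \notin S, y \notin S & g x y])].

Definition FA g := [set hA | validA g hA && ~~ copyL hA].

Definition Good g (hA : Lab) w := [set s : {ffun T -> option 'I_r} |
  [forall y, (s y != None) == g w y] && ~~ copyL (combine hA w s)].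

Definition y0 : {ffun T -> option 'I_r} := [ffun _ => None].

Definition build (hA : Lab) (ss : Lab) : Lab :=
  [ffun x => [ffun y => if x \in S then ss x y else if y \in S then ss y x else hA x y]].

Lemma validAP g hA : validA g hA ->
  (forall x y, hA x y = hA y x) /\
  (forall x y, (hA x y != None) = [&& x \notin S, y \notin S & g x y]).
Proof.
move=> V; split=> x y.
  by have /forallP/(_ y)/andP[/eqP] := forallP V x.
by have /forallP/(_ y)/andP[_ /eqP] := forallP V x.
Qed.

Lemma foldr_prod (I : eqType) (f : I -> nat) (s : seq I) :
  foldr muln 1 [seq f x | x <- s] = \prod_(x <- s) f x.
Proof. by elim: s => [|x s IH]; rewrite ?big_nil ?big_cons //= IH. Qed.

Section G2.
Variable g : rel T.
Hypothesis gsym : forall x y, g x y = g y x.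
Hypothesis girr : forall x, ~~ g x x.
Hypothesis Sind : forall x y, x \in S -> y \in S -> ~~ g x y.

Lemma copy_decomp h : validL g h ->
  copyL h = copyL (restrictA h) || [exists w in S, copyL (combine (restrictA h) w (h w))].
Proof.
move=> V; have [Vs Vn] := validP _ _ V.
have SN x y : x \in S -> y \in S -> h x y = None.
  by move=> Sx Sy; apply/eqP; rewrite -[_ == _]negbK Vn (negbTE (Sind _ _ Sx Sy)).
apply/idP/idP.
- case/existsP => f C.
  case: (pickP (fun i => f i \in S)) => [i0 Si0 | NS].
  + apply/orP; right; apply/existsP; exists (f i0); rewrite Si0 /=; apply/existsP; exists f.
    rewrite (@copy_at_eq _ h f f) // => i j ij; rewrite !ffunE.
    case: eqP => [->|ne1] //.
    case: eqP => [->|ne2]; first by rewrite Vs.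
    rewrite ?ffunE; case: ifP => // /orP HS; exfalso.
    case: HS => HS.
    * have ii0 : i != i0 by apply: contra_not_neq ne1 => ->.
      by move: (copy_at_None _ _ _ _ C ii0); rewrite SN.
    * have ji0 : j != i0 by apply: contra_not_neq ne2 => ->.
      by move: (copy_at_None _ _ _ _ C ji0); rewrite SN.
  + apply/orP; left; apply/existsP; exists f.
    by rewrite (@copy_at_eq _ h f f) // => i j _; rewrite !ffunE !NS.
- case/orP => [/existsP [f C] | /existsP [w /andP [Sw /existsP [f C]]]];
    apply/existsP; exists f; apply: (copy_at_ext _ _ _ C) => x y; rewrite !ffunE.
  + by case: ifP.
  + case: (eqVneq x w) => [->|xw] //=.
    case: (eqVneq y w) => [->|yw] /=; first by rewrite Vs.
    by case: ifP.
Qed.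

Lemma fiber_card hA : hA \in FA g ->
  #|[set h in freeL g | restrictA h == hA]| = \prod_(w in S) #|Good g hA w|.
Proof.
rewrite inE => /andP [VA NA]; have [As An] := validAP _ _ VA.
have AN x y : (x \in S) || (y \in S) -> hA x y = None.
  by move=> H; apply/eqP; rewrite -[_ == _]negbK An; case/orP: H => ->; rewrite ?andbF.
pose pf := pfamily y0 S (fun w => Good g hA w).
have -> : [set h in freeL g | restrictA h == hA] = build hA @: pf.
  apply/setP => h; rewrite !inE; apply/idP/imsetP.
  - case/andP => /andP [V N] /eqP E; have [Vs Vn] := validP _ _ V.
    exists [ffun w => if w \in S then h w else y0].
      apply/pfamilyP; split.
        by apply/supportP => x /negbTE Sx; rewrite ffunE Sx.
      move=> w Sw; rewrite ffunE Sw inE; apply/andP; split.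
        by apply/forallP => y; rewrite Vn.
      move: N; rewrite (copy_decomp _ V) E negb_or => /andP [_ /existsPn/(_ w)].
      by rewrite Sw.
    apply/ffunP => x; apply/ffunP => y; rewrite !ffunE -E !ffunE.
    by case: (x \in S) => //; case: (y \in S) => //=; rewrite ffunE Vs.
  - case=> ss /pfamilyP [/supportP Sup Fam] ->.
    have Gd w : w \in S -> [forall y, (ss w y != None) == g w y] && ~~ copyL (combine hA w (ss w)).
      by move=> Sw; have := Fam w Sw; rewrite inE.
    have ssN w y : w \in S -> (ss w y != None) = g w y.
      by move=> Sw; have /andP [/forallP/(_ y)/eqP] := Gd w Sw.
    have V : validL g (build hA ss).
      apply/forallP => x; apply/forallP => y; rewrite !ffunE.
      case Sx: (x \in S); case Sy: (y \in S) => /=.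
      - rewrite !ssN // (negbTE (Sind _ _ Sx Sy)) andbT.
        have n1 : ss x y = None by apply/eqP; rewrite -[_ == _]negbK ssN // (negbTE (Sind _ _ Sx Sy)).
        have n2 : ss y x = None by apply/eqP; rewrite -[_ == _]negbK ssN // (negbTE (Sind _ _ Sy Sx)).
        by rewrite n1 n2.
      - by rewrite eqxx ssN ?Sx ?eqxx.
      - by rewrite eqxx ssN ?Sy // gsym eqxx.
      - by rewrite An Sx Sy As !eqxx.
    have E : restrictA (build hA ss) = hA.
      apply/ffunP => x; apply/ffunP => y; rewrite !ffunE.
      case: ifP => [H|]; first by rewrite AN.
      by move/negbT; rewrite negb_or => /andP [/negbTE -> /negbTE ->].
    rewrite E eqxx andbT V /= (copy_decomp _ V) E (negbTE NA) /=.
    apply/existsPn => w; apply/negP => /andP [Sw C].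
    have : build hA ss w = ss w by apply/ffunP => y; rewrite !ffunE Sw.
    by move=> Eb; move: C; rewrite Eb; have /andP [_ /negP] := Gd w Sw.
rewrite card_in_imset.
  by rewrite card_pfamily foldr_prod big_enum.
move=> s1 s2 /pfamilyP [/supportP S1 _] /pfamilyP [/supportP S2 _] E.
apply/ffunP => w; case Sw: (w \in S); last by rewrite S1 ?S2 ?Sw.
apply/ffunP => y; have := congr1 (fun h : Lab => h w y) E; by rewrite !ffunE Sw.
Qed.

Lemma count_decomp (i0 : 'I_r) :
  count_free g F = \sum_(hA in FA g) \prod_(w in S) #|Good g hA w|.
Proof.
rewrite (count_freeE g gsym girr i0) -sum1_card.
rewrite (partition_big (restrictA) (fun hA => hA \in FA g)); last first.
  move=> h; rewrite inE => /andP [V N]; have [Vs Vn] := validP _ _ V.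
  rewrite inE; apply/andP; split.
    apply/forallP => x; apply/forallP => y; rewrite !ffunE.
    case Sx: (x \in S); case Sy: (y \in S) => //=.
    by rewrite Vn [h x y]Vs !eqxx.
  by move: N; rewrite (copy_decomp _ V) negb_or => /andP [].
apply: eq_bigr => hA HA; rewrite -(fiber_card _ HA) -sum1_card.
by apply: eq_bigl => h; rewrite inE.
Qed.

End G2.

Lemma tperm_S w v z : w \in S -> v \in S ->
  tperm w v z = z \/ (z \in S /\ tperm w v z \in S).
Proof.
move=> Sw Sv; case: tpermP => [->|->|]; by [right | left].
Qed.

Lemma combine_perm1 (hA : Lab) (s : {ffun T -> option 'I_r}) w v : w \in S -> v \in S ->
  (forall x y, (x \in S) || (y \in S) -> hA x y = None) ->
  (forall y, y \in S -> s y = None) ->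
  copyL (combine hA w s) -> copyL (combine hA v s).
Proof.
move=> Sw Sv AN sN /existsP [f C]; apply/existsP.
pose p := tperm w v.
exists [ffun i => p (f i)].
have sp z : s (p z) = s z.
  by case: (tperm_S _ _ z Sw Sv) => [->|[H1 H2]] //; rewrite !sN.
have Ap a b : hA (p a) (p b) = hA a b.
  case: (tperm_S _ _ a Sw Sv) => [Ea|[H1 H2]]; last by rewrite !AN ?H1 ?H2.
  case: (tperm_S _ _ b Sw Sv) => [Eb|[H1 H2]]; last by rewrite !AN ?H1 ?H2 ?orbT.
  by rewrite Ea Eb.
have pv a : (p a == v) = (a == w).
  by rewrite -{1}(tpermL w v) (inj_eq (@perm_inj _ _)).
rewrite (@copy_at_eq _ (combine hA w s) _ f) //.
  apply/injectiveP/injectiveP => [H i j E|H i j E].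
    by apply: H; rewrite !ffunE E.
  by apply: H; move: E; rewrite !ffunE => /perm_inj.
move=> i j _; rewrite !ffunE !pv sp.
case: (f i == w) => //; case: (f j == w) => //; by rewrite sp.
Qed.

End SS.
End Lab.

Lemma twin_props (T : finType) (g : rel T) (S : {set T}) v :
  (forall x y, g x y = g y x) -> (forall x, ~~ g x x) ->
  (forall x y, x \in S -> y \in S -> ~~ g x y) -> v \in S ->
  [/\ forall x y, twin_graph g S v x y = twin_graph g S v y x,
      forall x, ~~ twin_graph g S v x x,
      forall x y, x \in S -> y \in S -> ~~ twin_graph g S v x y,
      forall x y, x \notin S -> y \notin S -> twin_graph g S v x y = g x y &
      forall w y, w \in S -> twin_graph g S v w y = g v y].
Proof.
move=> gs gi Si Sv; rewrite /twin_graph; split.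
- move=> x y; case Sx: (x \in S); case Sy: (y \in S) => //=.
- by move=> x; case Sx: (x \in S) => //=; rewrite gi.
- by move=> x y -> ->.
- by move=> x y /negbTE -> /negbTE ->.
- move=> w y ->; case Sy: (y \in S) => //=.
  by rewrite (negbTE (Si _ _ Sv Sy)).
Qed.

Lemma Good_twin r k (T : finType) (F : coloring (@Kk k) r) (g : rel T) (S : {set T}) v (hA : {ffun T -> {ffun T -> option 'I_r}}) w :
  (forall x y, x \in S -> y \in S -> ~~ g x y) -> v \in S -> w \in S ->
  validA r T S g hA ->
  Good r k T F (twin_graph g S v) hA w = Good r k T F g hA v.
Proof.
move=> Si Sv Sw VA; have [_ An] := validAP r T S g hA VA.
have AN x y : (x \in S) || (y \in S) -> hA x y = None.
  move=> H; apply/eqP; rewrite -[_ == _]negbK An; apply/negP; case/and3P => Nx Ny _.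
  by case/orP: H => H; [rewrite H in Nx | rewrite H in Ny].
rewrite /Good; apply: eq_finset => s /=.
have -> : [forall y, (s y != None) == twin_graph g S v w y] =
          [forall y, (s y != None) == g v y].
  apply: eq_forallb => y; rewrite /twin_graph Sw; case Sy: (y \in S) => //=.
  by rewrite (negbTE (Si _ _ Sv Sy)).
apply: andb_id2l => /forallP H.
have sN y : y \in S -> s y = None.
  move=> Sy; have /eqP := H y; rewrite (negbTE (Si _ _ Sv Sy)).
  by move/negbFE/eqP.
congr (~~ _); apply/idP/idP; [exact: (combine_perm1 r k T F S hA s w v Sw Sv AN sN) | exact: (combine_perm1 r k T F S hA s v w Sv Sw AN sN)].
Qed.

Theorem lemma2p7 (r k : nat) (T : finType) (g : rel T) (S : {set T})
  (F : coloring (@Kk k) r) :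
  2 <= r -> 3 <= k ->
  (forall x y, g x y = g y x) -> (forall x, ~~ g x x) ->
  (forall x y, x \in S -> y \in S -> ~~ g x y) ->
  0 < #|S| ->
  exists2 v, v \in S &
    count_free g F <= count_free (twin_graph g S v) F.
Proof.
move=> r2 _ gs gi Si /card_gt0P [v0 Sv0].
have r0 : 0 < r by apply: leq_trans r2.
pose i0 : 'I_r := Ordinal r0.
pose M w := \sum_(hA in FA r k T F S g) #|Good r k T F g hA w| ^ #|S|.
case: (@arg_maxnP _ v0 (fun v => v \in S) M Sv0) => v Sv Hmax.
exists v => //.
have [ts ti tS tA tW] := twin_props T g S v gs gi Si Sv.
rewrite (count_decomp r k T F S g gs gi Si i0) (count_decomp r k T F S (twin_graph g S v) ts ti tS i0).
have EFA : FA r k T F S (twin_graph g S v) = FA r k T F S g.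
  apply/setP => hA; rewrite !inE; congr (_ && _).
  apply: eq_forallb => x; apply: eq_forallb => y; congr (_ && (_ == _)).
  case Sx: (x \in S); case Sy: (y \in S) => //=.
  by rewrite tA ?Sx ?Sy.
rewrite EFA.
have EG hA w : hA \in FA r k T F S g -> w \in S ->
    Good r k T F (twin_graph g S v) hA w = Good r k T F g hA v.
  by rewrite inE => /andP [VA _] Sw; apply: Good_twin.
have E2 hA : hA \in FA r k T F S g ->
    \prod_(w in S) #|Good r k T F (twin_graph g S v) hA w| = #|Good r k T F g hA v| ^ #|S|.
  move=> HA; rewrite -prod_nat_const; apply: eq_bigr => w Sw.
  by rewrite (EG hA w HA Sw).
rewrite (eq_bigr _ E2).
have s0 : 0 < #|S| by apply/card_gt0P; exists v0.
rewrite -(leq_pmul2l s0) big_distrr /=.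
apply: (@leq_trans (\sum_(hA in FA r k T F S g) \sum_(w in S) #|Good r k T F g hA w| ^ #|S|)).
  by apply: leq_sum => hA _; apply: amgm.
rewrite exchange_big /=.
rewrite -[X in _ <= X * _]sum1_card big_distrl /=.
by apply: leq_sum => w Sw; rewrite mul1n; apply: Hmax.
Qed.
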